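(* Assume the setting and conditions below. Then for almost every $\omega\in\Omega$ the function $\theta\mapsto\max_{W\in\mathcal W}F(W,H(\theta,\omega))$ is Fréchet differentiable on $\Theta$, and at each $\theta\in\Theta$ its gradient equals $\nabla_\theta F(W,H(\theta,\omega))|_{W=W^*(\theta,\omega)}$ for every $W^*(\theta,\omega)\in\arg\max_{W\in\mathcal W}F(W,H(\theta,\omega))$, irrespective of the choice of this maximizer.
   Context: Let $\omega$ be a random element with values in $\Omega$; let $K,M$ be positive integers, $M_U=MK$, $S$ a positive integer, $\Theta\subset\mathbb R^S$ compact convex, $\mathcal U\supset\Theta$ open, $H:\mathcal U\times\Omega\to\mathbb C^{M_U}$, $H=\mathrm{vec}(h_1,\dots,h_K)$ with $h_k\in\mathbb C^M$. Let $P>0$ and $\mathcal W=\{W\in\mathbb C^{M_U}:\|W\|^2\le P\}$, $W=\mathrm{vec}(w_1,\dots,w_K)$. $F$ is the weighted sumrate $F(W,H)=\sum_{k=1}^K\alpha_k\log_2\big(1+\frac{|h_k^{\mathsf H}w_k|^2}{\sum_{j\ne k}|h_k^{\mathsf H}w_j|^2+\sigma_k^2}\big)$ with $\alpha_k\ge0$, $\sigma_k^2>0$. Conditions: (A3) there are constants $B_H,L_{H,0},L_{H,1}$ such that for a.e. $\omega$, $H(\cdot,\omega)$ is bounded by $B_H$ on $\Theta$, twice continuously differentiable on $\mathcal U$, $L_{H,0}$-Lipschitz with $L_{H,1}$-Lipschitz gradient on $\Theta$; $H(\cdot,\omega)$ is real-analytic on $\mathcal U$ for a.e. $\omega$; strong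 second-order sufficient optimality: for every $\theta\in\Theta$, a.e. $\omega$ and every maximizer $W^*$ of $F(\cdot,H(\theta,\omega))$ over $\mathcal W$, with Lagrangian $L(W,\lambda;\theta,\omega)=F(W,H(\theta,\omega))+\lambda(\|W\|^2-P)$, there is $\lambda^*\ge0$ with strict complementarity ($\lambda^*>0$ if $\|W^*\|^2=P$, $\lambda^*=0$ otherwise) and $\nabla^2_WL(W^*,\lambda^*;\theta,\omega)$ nonsingular. Further, $\Theta''$ compact and $\Theta'$ open with $\mathcal U\supset\Theta''\supset\Theta'\supset\Theta$, and there are $\eta>0$ and a positive function $C(\theta)$ uniformly bounded on $\Theta''$ such that for a.e. $\omega$ and all $(\theta,W)\in\mathcal U\times\mathcal W$: $\mathrm{dist}(W,\arg\max_{V\in\mathcal W}F(V,H(\theta,\omega)))\le C(\theta)\big(\max_{V\in\mathcal W}F(V,H(\theta,\omega))-F(W,H(\theta,\omega))\big)^\eta$. *)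

(* Defs.v *)
From mathcomp Require Import all_boot all_order all_algebra.
From mathcomp Require Import all_classical all_reals all_analysis.
Import Order.TTheory GRing.Theory Num.Theory.
Import numFieldNormedType.Exports.

Set Implicit Arguments.
Unset Strict Implicit.
Unset Printing Implicit Defensive.

Local Open Scope classical_set_scope.
Local Open Scope ring_scope.

Section Defs.
Variable R : realType.

(* A complex K x M array, stored as (real part, imaginary part).
   Row k (k : 'I_K) is the complex vector h_k (resp. w_k) in C^M, so that
   an element of cmat K M is vec(h_1,...,h_K) in C^(M K). *)
Definition cmat (K M : nat) := ('M[R]_(K, M) * 'M[R]_(K, M))%type.

Definition csqnorm K M (X : cmat K M) : R :=
  \sum_(k < K) \sum_(m < M) (X.1 k m ^+ 2 + X.2 k m ^+ 2).
Definition cnorm K M (X : cmat K M) : R := Num.sqrt (csqnorm X).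

Definition rnorm n (t : 'rV[R]_n) : R := Num.sqrt (\sum_(i < n) t 0 i ^+ 2).

(* |h_k^H w_j|^2 with h^H w = sum_m conj(h_m) w_m *)
Definition herm_re K M (H W : cmat K M) (k j : 'I_K) : R :=
  \sum_(m < M) (H.1 k m * W.1 j m + H.2 k m * W.2 j m).
Definition herm_im K M (H W : cmat K M) (k j : 'I_K) : R :=
  \sum_(m < M) (H.1 k m * W.2 j m - H.2 k m * W.1 j m).
Definition herm_abs2 K M (H W : cmat K M) (k j : 'I_K) : R :=
  herm_re H W k j ^+ 2 + herm_im H W k j ^+ 2.

Definition log2 (x : R) : R := ln x / ln 2.

Definition sumrate K M (alpha sigma2 : 'I_K -> R) (W H : cmat K M) : R :=
  \sum_(k < K) alpha k *
    log2 (1 + herm_abs2 H W k k /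
              (\sum_(j < K | j != k) herm_abs2 H W k j + sigma2 k)).

Definition Wset K M (P : R) : set (cmat K M) := [set W | csqnorm W <= P].
Arguments Wset K M P _ : clear implicits.

Definition maxval K M (F : cmat K M -> cmat K M -> R) (P : R) (H : cmat K M) : R :=
  sup [set F V H | V in Wset K M P].
Definition argmax K M (F : cmat K M -> cmat K M -> R) (P : R) (H : cmat K M)
  : set (cmat K M) :=
  [set W | Wset K M P W /\ forall V, Wset K M P V -> F V H <= F W H].

Definition cdist K M (W : cmat K M) (A : set (cmat K M)) : R :=
  inf [set cnorm (W - V) | V in A].

Definition lagrangian K M (F : cmat K M -> cmat K M -> R) (P : R)
  (W : cmat K M) (lam : R) (H : cmat K M) : R :=
  F W H + lam * (csqnorm W - P).

(* real coordinates of C^(M K) = R^(2 M K): (part, k, m), part 0 = Re, 1 = Im *)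
Definition cidx K M := ('I_2 * 'I_K * 'I_M)%type.
Definition cbasis K M (c : cidx K M) : cmat K M :=
  let: (b, k, m) := c in
  if b == ord0 then (delta_mx k m, 0) else (0, delta_mx k m).

Definition hessian K M (f : cmat K M -> R) (W : cmat K M)
  : 'M[R]_(#|{: cidx K M}|) :=
  \matrix_(i, j) 'D_(cbasis (enum_val i)) ('D_(cbasis (enum_val j)) f) W.

Definition C2_on n (V : normedModType R) (U : set 'rV[R]_n) (f : 'rV[R]_n -> V) :=
  [/\ forall x, U x -> differentiable f x,
      forall v x, U x -> differentiable ('D_v f) x &
      forall u v x, U x -> {for x, continuous ('D_u ('D_v f))}].

(* real-analytic on U: around every point of U, f is the sum of an absolutely
   convergent power series (terms grouped by total degree n, with coefficient
   tensors c n : {ffun 'I_n -> 'I_S} -> V). *)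
Definition real_analytic_on n (V : normedModType R) (U : set 'rV[R]_n)
  (f : 'rV[R]_n -> V) :=
  forall x0, U x0 ->
  exists (c : forall d : nat, {ffun 'I_d -> 'I_n} -> V) (r : R), 0 < r /\
  forall h : 'rV[R]_n, rnorm h < r ->
    (fun N => \sum_(d < N) \sum_(i : {ffun 'I_d -> 'I_n})
                 (\prod_(l < d) h 0 (i l)) *: c d i) @ \oo --> f (x0 + h)
    /\ exists l : R,
    (fun N => \sum_(d < N) \sum_(i : {ffun 'I_d -> 'I_n})
                 `|\prod_(l < d) h 0 (i l)| * `|c d i|) @ \oo --> l.

End Defs.
Arguments Wset {R} K M P _.

(* Main.v *)
From HB Require Import structures.
Require Import Defs.
From mathcomp Require Import all_boot all_order all_algebra.
From mathcomp Require Import all_classical all_reals all_analysis.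
From mathcomp Require Import ring lra.
Import Order.TTheory GRing.Theory Num.Theory.
Import numFieldNormedType.Exports.
Local Open Scope classical_set_scope.
Local Open Scope ring_scope.

Set Implicit Arguments.
Unset Strict Implicit.
Unset Printing Implicit Defensive.

Section QP.
Variable R : realType.
Variables K M : nat.
Local Notation T := (cmat R K M).

Lemma coord1_le (X : T) i j : `|X.1 i j| <= `|X|.
Proof.
rewrite prod_normE le_max; apply/orP; left.
rewrite [leRHS]/Num.norm /= mx_normrE.
exact: (le_bigmax _ (fun ij : 'I_K * 'I_M => `|X.1 ij.1 ij.2|) (i, j)).
Qed.

Lemma coord2_le (X : T) i j : `|X.2 i j| <= `|X|.
Proof.
rewrite prod_normE le_max; apply/orP; right.
rewrite [leRHS]/Num.norm /= mx_normrE.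
exact: (le_bigmax _ (fun ij : 'I_K * 'I_M => `|X.2 ij.1 ij.2|) (i, j)).
Qed.

Definition near2 (W0 X0 : T) (P : T -> T -> Prop) :=
  exists2 d : R, 0 < d & forall W X, `|W - W0| < d -> `|X - X0| < d -> P W X.

Lemma near2_and W0 X0 (P Q : T -> T -> Prop) :
  near2 W0 X0 P -> near2 W0 X0 Q -> near2 W0 X0 (fun W X => P W X /\ Q W X).
Proof.
move=> [d1 d10 H1] [d2 d20 H2]; exists (Num.min d1 d2); first by rewrite lt_min d10 d20.
move=> W X; rewrite !lt_min => /andP[a b] /andP[c e]; split; [exact: H1|exact: H2].
Qed.

Lemma near2_impl W0 X0 (P Q : T -> T -> Prop) :
  (forall W X, P W X -> Q W X) -> near2 W0 X0 P -> near2 W0 X0 Q.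
Proof. by move=> PQ [d d0 H]; exists d => // W X a b; apply/PQ/H. Qed.

Definition Qp (W0 X0 : T) (f : T -> T -> R) :=
 [/\ forall e, 0 < e -> near2 W0 X0 (fun W X => `|f W X - f W0 X0| <= e),
     exists2 c, 0 < c & near2 W0 X0 (fun W X => `|f W X - f W X0| <= c * `|X - X0|),
     forall e, 0 < e -> near2 W0 X0
        (fun W X => `|f W X - f W X0 - f W0 X + f W0 X0| <= e * `|X - X0|) &
     differentiable (f W0) X0].

Lemma Qp_ext W0 X0 (f g : T -> T -> R) :
  (forall W X, f W X = g W X) -> Qp W0 X0 f -> Qp W0 X0 g.
Proof.
move=> fg; have -> : g = f by apply/funext => W; apply/funext => X; rewrite fg.
done.
Qed.

Lemma Qp_cst W0 X0 (c : R) : Qp W0 X0 (fun _ _ => c).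
Proof.
split.
- by move=> e e0; exists 1 => // W X _ _; rewrite subrr normr0 ltW.
- by exists 1 => //; exists 1 => // W X _ _; rewrite subrr normr0 mul1r.
- move=> e e0; exists 1 => // W X _ _.
  by rewrite subrr sub0r addrC subrr normr0 mulr_ge0 // ltW.
- exact: differentiable_cst.
Qed.


Lemma sub1E (X Y : T) i j : (X - Y).1 i j = X.1 i j - Y.1 i j.
Proof. by rewrite /= !mxE. Qed.
Lemma sub2E (X Y : T) i j : (X - Y).2 i j = X.2 i j - Y.2 i j.
Proof. by rewrite /= !mxE. Qed.

Lemma mix0 (a b : R) : a - b - a + b = 0.
Proof. by ring. Qed.

Lemma lip_cont (V : normedModType R) (f : V -> R) x c : 0 <= c ->
  (forall y, `|f y - f x| <= c * `|y - x|) -> {for x, continuous f}.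
Proof.
move=> c0 H; apply/cvgrPdist_le => e e0.
apply/nbhs_ballP; exists (e / (c + 1)); first (rewrite /=; apply: divr_gt0 => //; exact: ltr_wpDl). 
move=> y; rewrite -ball_normE /= => xy.
rewrite distrC; apply: le_trans (H y) _.
have c1 : 0 < c + 1 by rewrite ltr_wpDl.
apply: le_trans (_ : (c + 1) * `|y - x| <= e).
  by rewrite ler_wpM2r // lerDl.
rewrite mulrC -ler_pdivlMr //; rewrite distrC in xy; exact: ltW.
Qed.

Lemma diff_lin_T (f : T -> R) (X0 : T) :
  linear (f : T -> R^o) -> (forall X, `|f X| <= `|X|) -> differentiable f X0.
Proof.
move=> lin fb.
pose lM := GRing.isLinear.Build _ _ _ _ _ lin.
pose L : {linear T -> R^o} := HB.pack (f : T -> R^o) lM.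
have -> : f = L by [].
apply: linear_differentiable => x; apply: (@lip_cont _ L x 1) => // y.
by rewrite -linearB mul1r fb.
Qed.

Lemma Qp_Wfun W0 X0 (g : T -> R) :
  (forall e, 0 < e -> exists2 d, 0 < d & forall W, `|W - W0| < d -> `|g W - g W0| <= e) ->
  Qp W0 X0 (fun W _ => g W).
Proof.
move=> H; split.
- by move=> e e0; have [d d0 Hd] := H e e0; exists d => // W X a _; exact: Hd.
- by exists 1 => //; exists 1 => // W X _ _; rewrite subrr normr0 mul1r.
- move=> e e0; exists 1 => // W X _ _.
  by rewrite subrr sub0r addrC subrr normr0 mulr_ge0 // ltW.
- exact: differentiable_cst.
Qed.

Lemma Qp_W1 W0 X0 i j : Qp W0 X0 (fun W _ => W.1 i j).
Proof.
apply: (@Qp_Wfun W0 X0 (fun W => W.1 i j)) => e e0; exists e => // W We.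
by rewrite -sub1E; apply: le_trans (coord1_le _ _ _) _; exact: ltW.
Qed.

Lemma Qp_W2 W0 X0 i j : Qp W0 X0 (fun W _ => W.2 i j).
Proof.
apply: (@Qp_Wfun W0 X0 (fun W => W.2 i j)) => e e0; exists e => // W We.
by rewrite -sub2E; apply: le_trans (coord2_le _ _ _) _; exact: ltW.
Qed.

Lemma Qp_X1 W0 X0 i j : Qp W0 X0 (fun _ X => X.1 i j).
Proof.
split.
- move=> e e0; exists e => // W X _ Xe.
  by rewrite -sub1E; apply: le_trans (coord1_le _ _ _) _; exact: ltW.
- exists 1 => //; exists 1 => // W X _ _; rewrite mul1r -sub1E; exact: coord1_le.
- move=> e e0; exists 1 => // W X _ _.
  by rewrite mix0 normr0 mulr_ge0 // ltW.
- apply: diff_lin_T; last by move=> Y; exact: coord1_le.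
  by move=> a u v; rewrite /= !mxE.
Qed.

Lemma Qp_X2 W0 X0 i j : Qp W0 X0 (fun _ X => X.2 i j).
Proof.
split.
- move=> e e0; exists e => // W X _ Xe.
  by rewrite -sub2E; apply: le_trans (coord2_le _ _ _) _; exact: ltW.
- exists 1 => //; exists 1 => // W X _ _; rewrite mul1r -sub2E; exact: coord2_le.
- move=> e e0; exists 1 => // W X _ _.
  by rewrite mix0 normr0 mulr_ge0 // ltW.
- apply: diff_lin_T; last by move=> Y; exact: coord2_le.
  by move=> a u v; rewrite /= !mxE.
Qed.


Lemma Qp_add W0 X0 (f g : T -> T -> R) :
  Qp W0 X0 f -> Qp W0 X0 g -> Qp W0 X0 (fun W X => f W X + g W X).
Proof.
case=> fa [cf cf0 fb] fc fd [ga [cg cg0 gb] gc gd]; split.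
- move=> e e0; have e2 : 0 < e / 2 by rewrite divr_gt0.
  apply: near2_impl (near2_and (fa _ e2) (ga _ e2)) => W X [h1 h2].
  rewrite (_ : f W X + g W X - (f W0 X0 + g W0 X0) =
     (f W X - f W0 X0) + (g W X - g W0 X0)); last by ring.
  apply: le_trans (ler_normD _ _) _; lra.
- exists (cf + cg); first by rewrite addr_gt0.
  apply: near2_impl (near2_and fb gb) => W X [h1 h2].
  rewrite (_ : f W X + g W X - (f W X0 + g W X0) =
     (f W X - f W X0) + (g W X - g W X0)); last by ring.
  apply: le_trans (ler_normD _ _) _; rewrite mulrDl; lra.
- move=> e e0; have e2 : 0 < e / 2 by rewrite divr_gt0.
  apply: near2_impl (near2_and (fc _ e2) (gc _ e2)) => W X [h1 h2].
  rewrite (_ : f W X + g W X - (f W X0 + g W X0) - (f W0 X + g W0 X) + (f W0 X0 + g W0 X0) =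
     (f W X - f W X0 - f W0 X + f W0 X0) + (g W X - g W X0 - g W0 X + g W0 X0)); last by ring.
  apply: le_trans (ler_normD _ _) _.
  have -> : e * `|X - X0| = e / 2 * `|X - X0| + e / 2 * `|X - X0| by rewrite -mulrDl -splitr.
  exact: lerD.
- exact: differentiableD fd gd.
Qed.


Lemma pm (x y a b : R) : `|x| <= a -> `|y| <= b -> `|x * y| <= a * b.
Proof.
move=> ha hb; rewrite normrM; apply: ler_pM => //.
Qed.

Lemma bnd_near (z d : R) : `|z - d| <= 1 -> `|z| <= `|d| + 1.
Proof.
move=> h; have -> : z = (z - d) + d by ring.
by apply: le_trans (ler_normD _ _) _; rewrite addrC lerD2l.
Qed.

Lemma min1_pos (e C : R) : 0 < e -> 0 < C -> 
  [/\ 0 < Num.min 1 (e / C), Num.min 1 (e / C) <= 1 & Num.min 1 (e / C) * C <= e].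
Proof.
move=> e0 C0; split.
- by rewrite lt_min ltr01 divr_gt0.
- by rewrite ge_min lexx.
- rewrite -ler_pdivlMr //; by rewrite ge_min lexx orbT.
Qed.

Lemma Qp_mul W0 X0 (f g : T -> T -> R) :
  Qp W0 X0 f -> Qp W0 X0 g -> Qp W0 X0 (fun W X => f W X * g W X).
Proof.
case=> fa [cf cf0 fb] fc fd [ga [cg cg0 gb] gc gd].
set d := f W0 X0; set d' := g W0 X0.
have X00 : `|X0 - X0| = 0 by rewrite subrr normr0.
have W00 : `|W0 - W0| = 0 by rewrite subrr normr0.
split.
- move=> e e0; pose C := `|d'| + 1 + `|d|.
  have C0 : 0 < C by rewrite /C; have := normr_ge0 d; have := normr_ge0 d'; lra.
  have [e10 e11 e1C] := min1_pos e0 C0; set e1 := Num.min 1 (e / C) in e10 e11 e1C.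
  have [d1 d10 H1] := fa _ e10; have [d2 d20 H2] := ga _ e10.
  exists (Num.min d1 d2); first by rewrite lt_min d10 d20.
  move=> W X; rewrite !lt_min => /andP[w1 w2] /andP[x1 x2].
  have h1 := H1 W X w1 x1; have h2 := H2 W X w2 x2.
  have hg : `|g W X| <= `|d'| + 1 by apply: bnd_near; apply: le_trans h2 _.
  rewrite (_ : f W X * g W X - d * d' = (f W X - d) * g W X + d * (g W X - d')); last by ring.
  apply: le_trans (ler_normD _ _) _.
  apply: le_trans (lerD (pm h1 hg) (pm (lexx `|d|) h2)) _.
  by apply: le_trans e1C; rewrite /C; lra.
- exists (cf * (`|d'| + 1) + (`|d| + 1) * cg).
    by rewrite addr_gt0 // mulr_gt0 // ltr_wpDl.
  have [d1 d10 H1] := fa _ ltr01; have [d2 d20 H2] := ga _ ltr01.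
  have [d3 d30 H3] := fb; have [d4 d40 H4] := gb.
  exists (Num.min (Num.min d1 d2) (Num.min d3 d4)).
    by rewrite !lt_min d10 d20 d30 d40.
  move=> W X; rewrite !lt_min => /andP[/andP[w1 w2] /andP[w3 w4]] /andP[/andP[x1 x2] /andP[x3 x4]].
  have hg : `|g W X| <= `|d'| + 1 by apply: bnd_near; apply: H2.
  have hf : `|f W X0| <= `|d| + 1 by apply: bnd_near; apply: H1; rewrite ?X00.
  rewrite (_ : f W X * g W X - f W X0 * g W X0 =
     (f W X - f W X0) * g W X + f W X0 * (g W X - g W X0)); last by ring.
  apply: le_trans (ler_normD _ _) _.
  apply: le_trans (lerD (pm (H3 W X w3 x3) hg) (pm hf (H4 W X w4 x4))) _.
  by rewrite le_eqVlt; apply/orP; left; apply/eqP; ring.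
- move=> e e0; pose C := `|d'| + 1 + `|d| + cg + 2 * cf.
  have C0 : 0 < C by rewrite /C; have := normr_ge0 d; have := normr_ge0 d'; lra.
  have [e10 e11 e1C] := min1_pos e0 C0; set e1 := Num.min 1 (e / C) in e10 e11 e1C.
  have [d1 d10 H1] := fa _ e10; have [d2 d20 H2] := ga _ e10.
  have [d3 d30 H3] := fb; have [d4 d40 H4] := gb.
  have [d5 d50 H5] := fc _ e10; have [d6 d60 H6] := gc _ e10.
  exists (Num.min (Num.min (Num.min d1 d2) (Num.min d3 d4)) (Num.min d5 d6)).
    by rewrite !lt_min d10 d20 d30 d40 d50 d60.
  move=> W X; rewrite !lt_min => /andP[/andP[/andP[w1 w2] /andP[w3 w4]] /andP[w5 w6]]
     /andP[/andP[/andP[x1 x2] /andP[x3 x4]] /andP[x5 x6]].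
  set n := `|X - X0|.
  have hm := H5 W X w5 x5; have hm' := H6 W X w6 x6.
  have ha' : `|g W X| <= `|d'| + 1 by apply: bnd_near; apply: le_trans (H2 W X w2 x2) _.
  have hbd : `|f W X0 - d| <= e1 by apply: H1; rewrite ?X00.
  have hab' : `|g W X - g W X0| <= cg * n by apply: H4.
  have hcd : `|f W0 X - d| <= cf * n.
    by have := H3 W0 X; rewrite W00 => /(_ d30 x3).
  have hac' : `|g W X - g W0 X| <= 2 * e1.
    have -> : g W X - g W0 X = (g W X - d') - (g W0 X - d') by ring.
    apply: le_trans (ler_normB _ _) _; rewrite mulr2n mulrDl mul1r.
    by apply: lerD; [apply: H2|apply: H2; rewrite ?W00].
  rewrite (_ : f W X * g W X - f W X0 * g W X0 - f W0 X * g W0 X + d * d' =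
     (f W X - f W X0 - f W0 X + d) * g W X + (g W X - g W X0 - g W0 X + d') * d
     + (f W X0 - d) * (g W X - g W X0) + (f W0 X - d) * (g W X - g W0 X)); last by ring.
  apply: le_trans (ler_normD _ _) _; apply: le_trans (lerD (ler_normD _ _) (lexx _)) _.
  apply: le_trans (lerD (lerD (ler_normD _ _) (lexx _)) (lexx _)) _.
  apply: le_trans (lerD (lerD (lerD (pm hm ha') (pm hm' (lexx `|d|))) (pm hbd hab'))
                     (pm hcd hac')) _.
  have n0 : 0 <= n by rewrite /n normr_ge0.
  have -> : e1 * n * (`|d'| + 1) + e1 * n * `|d| + e1 * (cg * n) + cf * n * (2 * e1)
          = (e1 * C) * n by rewrite /C; ring.
  by apply: ler_wpM2r.
- exact: differentiableM fd gd.
Qed.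


Lemma ln_mul (x y : R) : 0 < x -> 0 < y -> ln (x * y) = ln x + ln y.
Proof. by move=> x0 y0; apply: lnM; rewrite posrE. Qed.

Lemma ln_sub_le (x y : R) : 0 < x -> 0 < y -> ln x - ln y <= (x - y) / y.
Proof.
move=> x0 y0; rewrite -ln_div ?posrE //.
have -> : x / y = 1 + (x - y) / y by field; rewrite gt_eqF.
apply: le_ln1Dx; rewrite (_ : (x - y) / y = x / y - 1); last by field; rewrite gt_eqF.
have : 0 < x / y by rewrite divr_gt0.
lra.
Qed.

Lemma ln_lip (x y m : R) : 0 < m -> m <= x -> m <= y -> `|ln x - ln y| <= `|x - y| / m.
Proof.
move=> m0 mx my; have x0 : 0 < x by apply: lt_le_trans mx.
have y0 : 0 < y by apply: lt_le_trans my.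
have key : forall u v : R, 0 < u -> 0 < v -> m <= v -> ln u - ln v <= `|u - v| / m.
  move=> u v u0 v0 mv; apply: le_trans (ln_sub_le u0 v0) _.
  apply: le_trans (_ : `|u - v| / v <= _).
    by apply: ler_wpM2r; [rewrite invr_ge0 ltW | exact: ler_norm].
  by apply: ler_wpM2l => //; rewrite lef_pV2 ?posrE.
rewrite ler_norml; apply/andP; split; last exact: key.
by rewrite lerNl opprB distrC; exact: key.
Qed.

Lemma Qp_ln W0 X0 (f : T -> T -> R) : 0 < f W0 X0 ->
  Qp W0 X0 f -> Qp W0 X0 (fun W X => ln (f W X)).
Proof.
move=> dpos [fa [cf cf0 fb] fc fd].
set d := f W0 X0 in dpos *.
have X00 : `|X0 - X0| = 0 by rewrite subrr normr0.
have W00 : `|W0 - W0| = 0 by rewrite subrr normr0.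
have d2 : 0 < d / 2 by rewrite divr_gt0.
have [d0 d00 H0] := fa _ d2.
have pos : forall W X, `|W - W0| < d0 -> `|X - X0| < d0 -> d / 2 <= f W X.
  move=> W X w x; have := H0 W X w x; rewrite -/d ler_norml => /andP[h _]; lra.
split.
- move=> e e0; have e1p : 0 < e * (d / 2) by rewrite mulr_gt0.
  have [d1 d10 H1] := fa _ e1p.
  exists (Num.min d0 d1); first by rewrite lt_min d00 d10.
  move=> W X; rewrite !lt_min => /andP[w0 w1] /andP[x0 x1].
  have hd : d / 2 <= d by lra.
  apply: le_trans (ln_lip d2 (pos W X w0 x0) hd) _.
  by rewrite ler_pdivrMr //; exact: H1.
- exists (cf / (d / 2)); first by rewrite divr_gt0.
  have [d1 d10 H1] := fb.
  exists (Num.min d0 d1); first by rewrite lt_min d00 d10.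
  move=> W X; rewrite !lt_min => /andP[w0 w1] /andP[x0 x1].
  apply: le_trans (ln_lip d2 (pos W X w0 x0) (pos W X0 w0 _)) _; first by rewrite X00.
  rewrite mulrAC; apply: ler_wpM2r; first by rewrite invr_ge0 ltW.
  exact: H1.
- move=> e e0; pose q := d * d / 4.
  have q0 : 0 < q by rewrite /q divr_gt0 // mulr_gt0.
  pose e1 := e * q / (d + cf).
  have e10 : 0 < e1 by rewrite /e1 divr_gt0 ?mulr_gt0 // addr_gt0.
  have [d1 d10 H1] := fa _ e10; have [d3 d30 H3] := fb; have [d5 d50 H5] := fc _ e10.
  exists (Num.min (Num.min d0 d1) (Num.min d3 d5)).
    by rewrite !lt_min d00 d10 d30 d50.
  move=> W X; rewrite !lt_min => /andP[/andP[w0 w1] /andP[w3 w5]]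
     /andP[/andP[x0 x1] /andP[x3 x5]].
  set n := `|X - X0|.
  have n0 : 0 <= n by rewrite /n normr_ge0.
  have pa := pos W X w0 x0.
  have pb : d / 2 <= f W X0 by apply: pos; rewrite ?X00.
  have pc : d / 2 <= f W0 X by apply: pos; rewrite ?W00.
  have hm := H5 W X w5 x5.
  have hbd : `|f W X0 - d| <= e1 by apply: H1; rewrite ?X00.
  have hcd : `|f W0 X - d| <= cf * n.
    by have := H3 W0 X; rewrite W00 => /(_ d30 x3).
  have qa : q <= f W X * d.
    have h : d / 2 * d <= f W X * d by apply: ler_wpM2r => //; exact: ltW.
    by apply: le_trans h; rewrite /q; nra.
  have qb : q <= f W X0 * f W0 X.
    have h : d / 2 * (d / 2) <= f W X0 * f W0 X.
      by apply: ler_pM => //; exact: ltW.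
    by apply: le_trans h; rewrite /q; lra.
  have ap : 0 < f W X by apply: lt_le_trans pa.
  have bp : 0 < f W X0 by apply: lt_le_trans pb.
  have cp : 0 < f W0 X by apply: lt_le_trans pc.
  have -> : ln (f W X) - ln (f W X0) - ln (f W0 X) + ln d =
            ln (f W X * d) - ln (f W X0 * f W0 X).
    by rewrite !ln_mul //; ring.
  apply: le_trans (ln_lip q0 qa qb) _.
  have hq : `|f W X * d - f W X0 * f W0 X| <= e1 * (d + cf) * n.
    have -> : f W X * d - f W X0 * f W0 X =
       (f W X - f W X0 - f W0 X + d) * d - (f W X0 - d) * (f W0 X - d) by ring.
    apply: le_trans (ler_normB _ _) _.
    apply: le_trans (lerD (pm hm (lexx `|d|)) (pm hbd hcd)) _.
    rewrite ger0_norm; last exact: ltW.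
    by rewrite -/n le_eqVlt; apply/orP; left; apply/eqP; ring.
  apply: le_trans (_ : e1 * (d + cf) * n / q <= _).
    by apply: ler_wpM2r => //; rewrite invr_ge0 ltW.
  rewrite le_eqVlt; apply/orP; left; apply/eqP; rewrite /e1; field.
  by rewrite !gt_eqF // addr_gt0.
- apply: differentiable_comp => //; apply/derivable1_diffP.
  by apply: ex_derive; exact: is_derive1_ln.
Qed.


Lemma Qp_sum W0 X0 n (F : 'I_n -> T -> T -> R) :
  (forall i, Qp W0 X0 (F i)) -> Qp W0 X0 (fun W X => \sum_(i < n) F i W X).
Proof.
elim: n F => [|n IH] F HF.
  by apply: Qp_ext (Qp_cst W0 X0 0) => W X; rewrite big_ord0.
apply: (@Qp_ext _ _ (fun W X => (\sum_(i < n) F (widen_ord (leqnSn n) i) W X)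
   + F ord_max W X)); first by move=> W X; rewrite big_ord_recr.
by apply: Qp_add; [apply: IH => i; exact: HF | exact: HF].
Qed.

Lemma Qp_opp W0 X0 (f : T -> T -> R) : Qp W0 X0 f -> Qp W0 X0 (fun W X => - f W X).
Proof.
move=> hf; apply: (@Qp_ext _ _ (fun W X => (-1) * f W X)).
  by move=> W X; rewrite mulN1r.
exact: Qp_mul (Qp_cst _ _ _) hf.
Qed.

Lemma Qp_herm_re W0 X0 k j : Qp W0 X0 (fun W X => herm_re X W k j).
Proof.
apply: (@Qp_sum _ _ M (fun m W X => X.1 k m * W.1 j m + X.2 k m * W.2 j m)) => m.
by apply: Qp_add; apply: Qp_mul; do ?[exact: Qp_X1|exact: Qp_X2|exact: Qp_W1|exact: Qp_W2].
Qed.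

Lemma Qp_herm_im W0 X0 k j : Qp W0 X0 (fun W X => herm_im X W k j).
Proof.
apply: (@Qp_sum _ _ M (fun m W X => X.1 k m * W.2 j m - X.2 k m * W.1 j m)) => m.
apply: Qp_add; last apply: Qp_opp; apply: Qp_mul;
  do ?[exact: Qp_X1|exact: Qp_X2|exact: Qp_W1|exact: Qp_W2].
Qed.

Lemma Qp_abs2 W0 X0 k j : Qp W0 X0 (fun W X => herm_abs2 X W k j).
Proof.
apply: (@Qp_ext _ _ (fun W X => herm_re X W k j * herm_re X W k j +
   herm_im X W k j * herm_im X W k j)).
  by move=> W X; rewrite /herm_abs2 !expr2.
by apply: Qp_add; apply: Qp_mul; do ?[exact: Qp_herm_re|exact: Qp_herm_im].
Qed.

Lemma abs2_ge0 (X W : T) k j : 0 <= herm_abs2 X W k j.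
Proof. by rewrite /herm_abs2 addr_ge0 // sqr_ge0. Qed.

Variables (alpha sigma2 : 'I_K -> R).
Hypothesis sig0 : forall k, 0 < sigma2 k.

Definition den (W X : T) k := \sum_(j < K | j != k) herm_abs2 X W k j + sigma2 k.

Lemma den_gt0 W X k : 0 < den W X k.
Proof. by rewrite /den ltr_wpDl ?sig0 // sumr_ge0 // => j _; exact: abs2_ge0. Qed.

Lemma Qp_den W0 X0 k : Qp W0 X0 (fun W X => den W X k).
Proof.
apply: Qp_add; last exact: Qp_cst.
apply: (@Qp_ext _ _ (fun W X => \sum_(j < K) (if j != k then herm_abs2 X W k j else 0))).
  by move=> W X; rewrite [RHS]big_mkcond.
apply: (@Qp_sum _ _ K (fun j W X => if j != k then herm_abs2 X W k j else 0)) => j.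
by case: (j != k); [exact: Qp_abs2 | exact: Qp_cst].
Qed.

Lemma sumrateE W X : sumrate alpha sigma2 W X =
  \sum_(k < K) (alpha k / ln 2) * (ln (herm_abs2 X W k k + den W X k) - ln (den W X k)).
Proof.
apply: eq_bigr => k _; rewrite /log2.
have d0 := den_gt0 W X k.
have a0 := abs2_ge0 X W k k.
rewrite -/(den W X k).
have -> : 1 + herm_abs2 X W k k / den W X k = (herm_abs2 X W k k + den W X k) / den W X k.
  by field; rewrite gt_eqF.
rewrite ln_div ?posrE //; last by rewrite ltr_wpDl.
by rewrite mulrA mulrAC.
Qed.

Lemma Qp_G W0 X0 : Qp W0 X0 (fun W X => sumrate alpha sigma2 W X).
Proof.
apply: (@Qp_ext _ _ (fun W X => \sum_(k < K) (alpha k / ln 2) *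
   (ln (herm_abs2 X W k k + den W X k) - ln (den W X k)))).
  by move=> W X; rewrite sumrateE.
apply: (@Qp_sum _ _ K (fun k W X => (alpha k / ln 2) *
   (ln (herm_abs2 X W k k + den W X k) - ln (den W X k)))) => k.
apply: Qp_mul; first exact: Qp_cst.
apply: Qp_add; last apply: Qp_opp; apply: Qp_ln.
- by rewrite ltr_wpDl ?den_gt0 ?abs2_ge0.
- by apply: Qp_add; [exact: Qp_abs2 | exact: Qp_den].
- exact: den_gt0.
- exact: Qp_den.
Qed.


Lemma lip_contV (V W' : normedModType R) (f : V -> W') x c : 0 <= c ->
  (forall y, `|f y - f x| <= c * `|y - x|) -> {for x, continuous f}.
Proof.
move=> c0 H; apply/cvgrPdist_le => e e0.
apply/nbhs_ballP; exists (e / (c + 1)).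
  by rewrite /=; apply: divr_gt0 => //; exact: ltr_wpDl.
move=> y; rewrite -ball_normE /= => xy.
rewrite distrC; apply: le_trans (H y) _.
have c1 : 0 < c + 1 by rewrite ltr_wpDl.
apply: le_trans (_ : (c + 1) * `|y - x| <= e).
  by rewrite ler_wpM2r // lerDl.
rewrite mulrC -ler_pdivlMr //; rewrite distrC in xy; exact: ltW.
Qed.

Lemma Qp_contW W0 X0 (f : T -> T -> R) : Qp W0 X0 f -> {for W0, continuous (fun W => f W X0)}.
Proof.
case=> fa _ _ _; apply/cvgrPdist_le => e e0; have [d d0 H] := fa e e0.
apply/(@nbhs_ballP R [the pseudoMetricType R of (T : Type)]); exists d => // W; rewrite -ball_normE /= => h.
rewrite distrC; apply: H; first by rewrite distrC.
by rewrite subrr normr0.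
Qed.

Lemma Qp_csq W0 X0 : Qp W0 X0 (fun W (_ : T) => csqnorm W).
Proof.
apply: (@Qp_sum _ _ K (fun k W (_ : T) => \sum_(m < M) (W.1 k m ^+ 2 + W.2 k m ^+ 2))) => k.
apply: (@Qp_sum _ _ M (fun m W (_ : T) => W.1 k m ^+ 2 + W.2 k m ^+ 2)) => m.
apply: (@Qp_ext _ _ (fun W (_ : T) => W.1 k m * W.1 k m + W.2 k m * W.2 k m)).
  by move=> W X; rewrite !expr2.
by apply: Qp_add; apply: Qp_mul; do ?[exact: Qp_W1|exact: Qp_W2].
Qed.

Lemma csq_cont : continuous (@csqnorm R K M).
Proof. by move=> W; exact: (Qp_contW (Qp_csq W 0)). Qed.

Lemma coord_sq_le (W : T) i j :
  W.1 i j ^+ 2 <= csqnorm W /\ W.2 i j ^+ 2 <= csqnorm W.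
Proof.
have h : W.1 i j ^+ 2 + W.2 i j ^+ 2 <= csqnorm W.
  rewrite /csqnorm (bigD1 i) //= (bigD1 j) //= -addrA lerDl.
  rewrite addr_ge0 // sumr_ge0 // => *; rewrite ?sumr_ge0 // => *;
   by rewrite addr_ge0 // sqr_ge0.
by split; apply: le_trans h; rewrite ?lerDl ?lerDr sqr_ge0.
Qed.

Lemma vec_mx_norm (v : 'rV[R]_(K * M)) : `|vec_mx v : 'M[R]_(K, M)| <= `|v|.
Proof.
rewrite [leLHS]/Num.norm /= mx_normrE.
apply/bigmax_leP; split => // -[i j] _ /=.
have -> : vec_mx v i j = v 0 (mxvec_index i j) by rewrite -[in RHS](vec_mxK v) mxvecE.
rewrite [leRHS]/Num.norm /= mx_normrE.
exact: (le_bigmax _ (fun ij : 'I_1 * 'I_(K * M) => `|v ij.1 ij.2|) (0, mxvec_index i j)).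
Qed.

Lemma Wset_compact (Pw : R) : 0 <= Pw -> compact (Wset K M Pw).
Proof.
move=> P0; set r := Pw + 1.
pose Box := [set v : 'rV[R]_(K * M) | forall i, `[- r, r]%classic (v ord0 i)].
have Bc : compact Box by apply: (@rV_compact _ _ (fun=> `[- r, r]%classic)) => i; exact: segment_compact.
pose B := (@vec_mx R K M) @` Box.
have Bcc : compact B.
  apply: continuous_compact => //; apply: continuous_subspaceT => v.
  apply: (@lip_contV _ _ _ v 1) => // u; rewrite mul1r -linearB; exact: vec_mx_norm.
apply: (@subclosed_compact _ _ (B `*` B)).
- apply: (@closed_comp _ _ (@csqnorm R K M) [set x | x <= Pw]); [move=> x _; exact: csq_cont | exact: closed_le].
- exact: compact_setX.
- move=> W WP; have key : forall A : 'M[R]_(K, M), (forall i j, A i j ^+ 2 <= Pw) -> B A.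
    move=> A HA; exists (mxvec A); last by rewrite mxvecK.
    move=> k; case/mxvec_indexP: k => i j; rewrite mxvecE /= in_itv /=.
    have := HA i j; rewrite -ler_norml; move=> h.
    have : `|A i j| ^+ 2 <= Pw by rewrite real_normK ?num_real.
    rewrite /r; nra.
  split; apply: key => i j; have [h1 h2] := coord_sq_le W i j;
    apply: le_trans WP; [exact: h1 | exact: h2].
Qed.


Local Notation G := (sumrate alpha sigma2).

Lemma near_ballT (x : T) (d : R) : 0 < d -> \forall y \near x, `|y - x| < d.
Proof.
move=> d0; apply/(@nbhs_ballP R [the pseudoMetricType R of (T : Type)]).
by exists d => // y; rewrite -ball_normE /= distrC.
Qed.

Lemma nbhsT_ball (x : T) (P : T -> Prop) : (\forall y \near x, P y) ->
  exists2 d : R, 0 < d & forall y, `|y - x| < d -> P y.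
Proof.
move/(@nbhs_ballP R [the pseudoMetricType R of (T : Type)]) => [d d0 H].
by exists d => // y h; apply: H; rewrite -ball_normE /= distrC.
Qed.

Lemma Wset0 (Pw : R) : 0 <= Pw -> Wset K M Pw (0 : T).
Proof.
move=> P0; rewrite /Wset /csqnorm /= big1 // => k _; rewrite big1 // => m _.
by rewrite !mxE expr2 mulr0 addr0.
Qed.

Lemma argmax_ex (Pw : R) (X : T) : 0 <= Pw -> exists W, argmax G Pw X W.
Proof.
move=> P0.
have ne : Wset K M Pw !=set0 by exists 0; exact: Wset0.
have ct : {within Wset K M Pw, continuous (fun W => G W X)}.
  by apply: continuous_subspaceT => W; exact: (Qp_contW (Qp_G W X)).
have [c cin cmax] := @compact_EVT_max _ R (fun W => G W X) (Wset K M Pw) ne (Wset_compact P0) ct.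
exists c; split; first by move: cin; rewrite inE.
by move=> V hV; apply: cmax; rewrite inE.
Qed.

Lemma maxval_eq (Pw : R) (X W : T) : argmax G Pw X W -> maxval G Pw X = G W X.
Proof.
move=> [WW Wmax]; rewrite /maxval.
have ne : [set G V X | V in Wset K M Pw] !=set0 by exists (G W X), W.
have ub : ubound [set G V X | V in Wset K M Pw] (G W X).
  by move=> y [V hV <-]; exact: Wmax.
apply/le_anti/andP; split; first exact: ge_sup.
by apply: sup_upper_bound; [split => //; exists (G W X) | exists W].
Qed.

Lemma maxval_ge (Pw : R) (X V : T) : 0 <= Pw -> Wset K M Pw V -> G V X <= maxval G Pw X.
Proof.
move=> P0 hV; have [W hW] := argmax_ex X P0.
by rewrite (maxval_eq hW); case: hW => _; apply.
Qed.

Lemma unifG (Pw : R) (X0 : T) e : 0 <= Pw -> 0 < e ->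
  exists2 d : R, 0 < d & forall X, `|X - X0| < d -> forall W, Wset K M Pw W ->
    `|G W X - G W X0| <= e.
Proof.
move=> P0 e0.
have := (compact_near_coveringP (Wset K M Pw)).1 (Wset_compact P0) T (nbhs X0)
   (fun X W => `|G W X - G W X0| <= e) _.
have /[swap]/[apply] : forall x, Wset K M Pw x ->
    \forall x' \near x & i \near nbhs X0, `|G x' i - G x' X0| <= e.
  move=> W WW; have e2 : 0 < e / 2 by rewrite divr_gt0.
  have [fa _ _ _] := Qp_G W X0; have [d d0 H] := fa _ e2.
  near=> W' X.
  have h1 : `|W' - W| < d by near: W'; exact: near_ballT.
  have h2 : `|X - X0| < d by near: X; exact: near_ballT.
  have a1 := H W' X h1 h2.
  have a2 : `|G W' X0 - G W X0| <= e / 2 by apply: H; rewrite // subrr normr0.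
  have -> : G W' X - G W' X0 = (G W' X - G W X0) - (G W' X0 - G W X0) by ring.
  apply: le_trans (ler_normB _ _) _; rewrite [leRHS]splitr; exact: lerD.
move=> /nbhsT_ball [d d0 H]; exists d => // X hX W WW; exact: H.
Unshelve. all: by end_near.
Qed.


Lemma little_diff S (g : 'rV[R]_S -> R) (t : 'rV[R]_S) :
  (forall e, 0 < e -> exists2 r : R, 0 < r & forall s, `|s - t| < r -> `|g s| <= e * `|s - t|) ->
  g t = 0 -> differentiable g t /\ ('d g t : 'rV[R]_S -> R) = 0.
Proof.
move=> Hg gt0.
have eq : (g : 'rV[R]_S -> R^o) \o shift t = cst (g t) + \0 +o_ (0 : 'rV[R]_S) id.
  apply/eqaddoP => e e0; have [r r0 H] := Hg e e0.
  apply/nbhs_ballP; exists r => // v; rewrite -ball_normE /= sub0r normrN => hv.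
  rewrite !fctE gt0 addr0 subr0.
  by have := H (v + t); rewrite addrK; apply.
have d0 : ('d g t : 'rV[R]_S -> R) = 0 by apply/diff_unique => //; exact: cst_continuous.
split => //; apply/diff_locallyP; rewrite d0; split => //; exact: cst_continuous.
Qed.


Lemma norm_le_cnorm (X : T) : `|X| <= cnorm X.
Proof.
have c0 : 0 <= cnorm X by exact: sqrtr_ge0.
have key : forall x : R, x ^+ 2 <= csqnorm X -> `|x| <= cnorm X.
  by move=> x h; rewrite /cnorm -sqrtr_sqr ler_sqrt // (le_trans _ h) // sqr_ge0.
rewrite prod_normE ge_max; apply/andP; split;
  rewrite [leLHS]/Num.norm /= mx_normrE; apply/bigmax_leP; split => // -[i j] _ /=;
  apply: key; have [h1 h2] := coord_sq_le X i j; [exact: h1 | exact: h2].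
Qed.

Lemma diff_lip S (h : 'rV[R]_S -> T) (t : 'rV[R]_S) : differentiable h t ->
  exists2 L : R, 0 < L & exists2 r1 : R, 0 < r1 &
    forall s, `|s - t| < r1 -> `|h s - h t| <= L * `|s - t|.
Proof.
move=> hd.
have [k k0 hk] := linear_lipschitz (diff_continuous hd).
have := diff_locally hd; move/eqaddoP => /(_ 1 ltr01).
move/(@nbhs_ballP R [the pseudoMetricType R of 'rV[R]_S]) => [r1 r10 H1].
exists (k + 1); first by rewrite ltr_wpDl // ltW.
exists r1 => // s hs.
have := H1 (s - t); rewrite -ball_normE /= sub0r normrN => /(_ hs).
rewrite !fctE subrK mul1r => hh.
have -> : h s - h t = (h s - (h t + 'd h t (s - t))) + 'd h t (s - t).
  by rewrite opprD addrA subrK.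
apply: le_trans (ler_normD _ _) _.
by rewrite mulrDl mul1r addrC; apply: lerD => //; exact: hk.
Qed.


Lemma danskin S (Pw : R) (h : 'rV[R]_S -> T) (t : 'rV[R]_S) (Cf : 'rV[R]_S -> R)
  (CB eta : R) (W0 : T) :
  0 <= Pw -> 0 < eta -> differentiable h t ->
  (exists2 r : R, 0 < r & forall s, `|s - t| < r -> Cf s <= CB /\
      forall W, Wset K M Pw W -> cdist W (argmax G Pw (h s))
          <= Cf s * powR (maxval G Pw (h s) - G W (h s)) eta) ->
  argmax G Pw (h t) W0 ->
  differentiable (fun s => maxval G Pw (h s)) t /\
  'd (fun s => maxval G Pw (h s)) t = 'd (fun s => G W0 (h s)) t :> ('rV[R]_S -> R).
Proof.
move=> P0 eta0 hd [r r0 EB] W0max.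
set X0 := h t.
have [_ _ Hmix Hd0] := Qp_G W0 X0.
have f0d : differentiable (fun s => G W0 (h s)) t := differentiable_comp hd Hd0.
have [L L0 [r1 r10 HL]] := diff_lip hd.
have gest : forall e, 0 < e -> exists2 rho : R, 0 < rho & forall s, `|s - t| < rho ->
    `|maxval G Pw (h s) - G W0 (h s)| <= e * `|s - t|.
  move=> e e0.
  have [d1 d10 Hm] := Hmix (e / L) (divr_gt0 e0 L0).
  pose CB' := `|CB| + 1.
  have CB'0 : 0 < CB' by rewrite /CB' ltr_wpDl.
  pose z := d1 / (2 * CB').
  have z0 : 0 < z by rewrite /z divr_gt0 // mulr_gt0.
  pose eps2 := powR z (eta^-1) / 2.
  have eps20 : 0 < eps2 by rewrite /eps2 divr_gt0 // powR_gt0.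
  have [d2 d20 Hu] := unifG X0 P0 eps20.
  exists (Num.min (Num.min r r1) (Num.min (d1 / L) (d2 / L))).
    by rewrite !lt_min r0 r10 !divr_gt0.
  move=> s; rewrite !lt_min => /andP[/andP[sr sr1] /andP[sd1 sd2]].
  have hX : `|h s - X0| <= L * `|s - t| := HL s sr1.
  have hX1 : `|h s - X0| < d1.
    by apply: le_lt_trans hX _; rewrite mulrC -ltr_pdivlMr.
  have hX2 : `|h s - X0| < d2.
    by apply: le_lt_trans hX _; rewrite mulrC -ltr_pdivlMr.
  have [CBs EBs] := EB s sr.
  have [W1' hW1'] := argmax_ex (h s) P0.
  have gap0 : 0 <= maxval G Pw (h s) - G W0 (h s).
    by rewrite subr_ge0 maxval_ge //; case: W0max.
  have gapb : maxval G Pw (h s) - G W0 (h s) <= 2 * eps2.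
    rewrite (maxval_eq hW1').
    have a := Hu (h s) hX2 W1' hW1'.1.
    have b := Hu (h s) hX2 W0 W0max.1.
    have c : G W1' X0 <= G W0 X0 := W0max.2 W1' hW1'.1.
    move: a b; rewrite !ler_norml => /andP[a1 a2] /andP[b1 b2]; lra.
  have pw : powR (maxval G Pw (h s) - G W0 (h s)) eta <= z.
    apply: le_trans (_ : powR (2 * eps2) eta <= z).
      apply: ge0_ler_powR; [exact: ltW | by rewrite nnegrE |
        by rewrite nnegrE mulr_ge0 // ltW | exact: gapb].
    rewrite /eps2 mulrC divfK ?pnatr_eq0 // -powRrM mulVf ?gt_eqF // powRr1 //.
    exact: ltW.
  have cd : cdist W0 (argmax G Pw (h s)) <= d1 / 2.
    apply: le_trans (EBs W0 W0max.1) _.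
    have p0 := powR_ge0 (maxval G Pw (h s) - G W0 (h s)) eta.
    have hz : CB' * z = d1 / 2 by rewrite /z; field; rewrite gt_eqF.
    rewrite -hz.
    have hC : Cf s <= CB' by rewrite /CB'; apply: le_trans CBs _; 
       apply: le_trans (ler_norm CB) _; rewrite lerDl.
    nra.
  pose E := [set cnorm (W0 - V) | V in argmax G Pw (h s)].
  have hinf : has_inf E.
    split; first by exists (cnorm (W0 - W1')), W1'.
    by exists 0 => y [V _ <-]; exact: sqrtr_ge0.
  have d120 : 0 < d1 / 2 by rewrite divr_gt0.
  have [y [V hV <-] hy] := inf_adherent d120 hinf.
  have hV1 : `|V - W0| < d1.
    rewrite distrC; apply: le_lt_trans (norm_le_cnorm _) _.
    apply: lt_le_trans hy _; rewrite [leRHS]splitr lerD2r; exact: cd.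
  have hmix := Hm V (h s) hV1 hX1.
  have c2 : G V X0 <= G W0 X0 := W0max.2 V hV.1.
  have c3 : G W0 (h s) <= G V (h s) := hV.2 W0 W0max.1.
  rewrite (maxval_eq hV) ger0_norm; last by rewrite subr_ge0.
  apply: le_trans (_ : e / L * `|h s - X0| <= _); last first.
    apply: le_trans (_ : e / L * (L * `|s - t|) <= _).
      by apply: ler_wpM2l => //; rewrite divr_ge0 // ltW.
    by rewrite mulrA divfK ?gt_eqF.
  apply: le_trans hmix; apply: le_trans (ler_norm _); lra.
pose g := fun s => maxval G Pw (h s) - G W0 (h s).
have g0t : g t = 0 by rewrite /g (maxval_eq W0max) subrr.
have [gd g0] := @little_diff S g t gest g0t.
have -> : (fun s => maxval G Pw (h s)) = (fun s => G W0 (h s)) + g.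
  by apply/funext => s; rewrite /g /= addrC subrK.
split; first exact: differentiableD.
rewrite diffD // g0; apply/funext => v /=; by rewrite addr0.
Qed.

End QP.

Unset Implicit Arguments.
Theorem lemma8 (R : realType) (d : measure_display) (Omega : measurableType d)
  (Prob : probability Omega R)
  (K M S : nat) (alpha sigma2 : 'I_K -> R) (Pw : R)
  (Theta U Theta' Theta'' : set 'rV[R]_S)
  (H : 'rV[R]_S -> Omega -> cmat R K M)
  (BH LH0 LH1 eta : R) (C : 'rV[R]_S -> R) :
  (0 < K)%N -> (0 < M)%N -> (0 < S)%N -> 0 < Pw ->
  (forall k, 0 <= alpha k) -> (forall k, 0 < sigma2 k) ->
  compact Theta -> convex_set Theta -> open U -> Theta `<=` U ->
  (* (A3) *)
  (\forall w \ae Prob,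
     [/\ forall t, Theta t -> cnorm (H t w) <= BH,
         C2_on U (fun t => H t w),
         forall t t', Theta t -> Theta t' ->
           cnorm (H t w - H t' w) <= LH0 * rnorm (t - t') &
         forall t t' v, Theta t -> Theta t' ->
           cnorm ('d (fun s => H s w) t v - 'd (fun s => H s w) t' v)
             <= LH1 * rnorm (t - t') * rnorm v]) ->
  (* real-analyticity *)
  (\forall w \ae Prob, real_analytic_on U (fun t => H t w)) ->
  (* strong second-order sufficient optimality *)
  (forall t, Theta t -> \forall w \ae Prob,
     forall Wst, argmax (sumrate alpha sigma2) Pw (H t w) Wst ->
     exists lam : R, [/\ 0 <= lam,
        csqnorm Wst = Pw -> 0 < lam,
        csqnorm Wst <> Pw -> lam = 0 &
        hessian (fun W => lagrangian (sumrate alpha sigma2) Pw W lam (H t w)) Wst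
          \in unitmx]) ->
  (* error bound *)
  compact Theta'' -> open Theta' ->
  Theta'' `<=` U -> Theta' `<=` Theta'' -> Theta `<=` Theta' ->
  0 < eta -> (forall t, U t -> 0 < C t) ->
  (exists CB : R, forall t, Theta'' t -> C t <= CB) ->
  (\forall w \ae Prob, forall t W, U t -> Wset K M Pw W ->
     cdist W (argmax (sumrate alpha sigma2) Pw (H t w))
       <= C t * powR (maxval (sumrate alpha sigma2) Pw (H t w)
                      - sumrate alpha sigma2 W (H t w)) eta) ->
  (* conclusion *)
  \forall w \ae Prob, forall t, Theta t ->
     differentiable (fun s => maxval (sumrate alpha sigma2) Pw (H s w)) t /\
     forall Wst, argmax (sumrate alpha sigma2) Pw (H t w) Wst ->
       differentiable (fun s => sumrate alpha sigma2 Wst (H s w)) t /\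
       forall v, 'd (fun s => maxval (sumrate alpha sigma2) Pw (H s w)) t v
               = 'd (fun s => sumrate alpha sigma2 Wst (H s w)) t v.
Proof.
move=> K0 M0 S0 Pw0 alpha0 sig0 cT cvT oU TU hA3 hAn hSOSC cT'' oT' T''U T'T'' TT'
  eta0 Cpos [CB HCB] hEB.
have P0 : 0 <= Pw by exact: ltW.
apply: filterS2 hA3 hEB => w [_ [C2a _ _] _ _] EBw t Tt.
have tT' : Theta' t by exact: TT'.
have tU : U t by apply: T''U; exact: T'T''.
have hd : differentiable (fun s => H s w) t by exact: C2a.
have EBr : exists2 r : R, 0 < r & forall s, `|s - t| < r -> C s <= CB /\
      forall W, Wset K M Pw W -> cdist W (argmax (sumrate alpha sigma2) Pw (H s w))
          <= C s * powR (maxval (sumrate alpha sigma2) Pw (H s w)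
                         - sumrate alpha sigma2 W (H s w)) eta.
  have : nbhs t Theta' by apply: open_nbhs_nbhs; split.
  move/(@nbhs_ballP R [the pseudoMetricType R of 'rV[R]_S]) => [r r0 Hr].
  exists r => // s hs.
  have sT' : Theta' s by apply: Hr; rewrite -ball_normE /= distrC.
  split; first by apply: HCB; exact: T'T''.
  move=> W WW; apply: EBw => //; apply: T''U; exact: T'T''.
have [W0 hW0] := argmax_ex alpha sig0 (H t w) P0.
split; first exact: (danskin sig0 P0 eta0 hd EBr hW0).1.
move=> Wst hWst; split.
  have [_ _ _ Hd0] := Qp_G alpha sig0 Wst (H t w).
  exact: differentiable_comp hd Hd0.
move=> v; exact: (congr1 (fun f => f v) (danskin sig0 P0 eta0 hd EBr hWst).2).
Qed.
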